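(* Let $G=(V,E)$ be a connected simple graph and let $\pi:V\to\mathbb{N}$ be any injection. Then the graph $G^{(\pi)}$ is connected.
   Context: For a vertex $u$, $N(u)=\{v\in V: uv\in E\}$ is its open neighbourhood. Given an injection $\pi:V\to\mathbb{N}$ (an ordering of the vertices), an ordered pair $(u,v)\in V^2$ is called good with respect to $\pi$ if $uv\in E$, $\pi(u)<\pi(v)$, and $\pi(u)<\pi(w)$ for every $w\in N(u)\cap N(v)$. The graph $G^{(\pi)}=(V,E^{(\pi)})$ is the spanning subgraph of $G$ with edge set $E^{(\pi)}=\{\{u,v\}: (u,v)\text{ is good with respect to }\pi\}$. *)

(* Defs.v *)
From mathcomp Require Import all_boot.
Set Implicit Arguments. Unset Strict Implicit. Unset Printing Implicit Defensive.

Definition simple_graph (V : finType) (e : rel V) : Prop := symmetric e /\ irreflexive e.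

Definition connected_graph (V : finType) (e : rel V) : Prop := forall x y : V, connect e x y.

Definition good (V : finType) (e : rel V) (pi : V -> nat) (u v : V) : bool :=
  [&& e u v, pi u < pi v & [forall w, (e u w && e v w) ==> (pi u < pi w)]].

Definition Gpi (V : finType) (e : rel V) (pi : V -> nat) : rel V :=
  fun u v => good e pi u v || good e pi v u.

(* Main.v *)
Require Import Defs.
From mathcomp Require Import all_boot.
From mathcomp Require Import zify.

Lemma key (V : finType) (e : rel V) (pi : V -> nat) :
  simple_graph e -> injective pi ->
  forall n u v, pi u + pi v < n -> e u v -> connect (Gpi e pi) u v.
Proof.
move=> [esym eirr] inj.
have GS : connect_sym (Gpi e pi).
  by apply: sym_connect_sym => x y; rewrite /Gpi orbC.
elim=> [//|n IH].
have main : forall u v, pi u + pi v < n.+1 -> e u v -> pi u < pi v ->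
    connect (Gpi e pi) u v.
  move=> u v Hn Huv Hlt.
  case Hg: (good e pi u v).
    by apply: connect1; rewrite /Gpi Hg.
  move: Hg; rewrite /good Huv Hlt /= => /negbT /forallPn [w].
  rewrite negb_imply => /andP [/andP [Huw Hvw] Hw].
  rewrite -leqNgt in Hw.
  have Hwu : pi w < pi u.
    rewrite ltn_neqAle Hw andbT; apply/eqP => /inj Ew.
    by move: Huw; rewrite Ew eirr.
  apply: (connect_trans (y := w)).
    apply: IH; last by [].
    lia.
  apply: IH; last by rewrite esym.
  lia.
move=> u v Hn Huv.
have Hne : pi u != pi v.
  apply/eqP => /inj E; by move: Huv; rewrite E eirr.
case: (ltngtP (pi u) (pi v)) => [H|H|E]; last by rewrite E eqxx in Hne.
  exact: main.
rewrite GS; apply: main => //; first by rewrite addnC.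
by rewrite esym.
Qed.


Theorem lemma2 (V : finType) (e : rel V) (pi : V -> nat) :
  simple_graph e -> connected_graph e -> injective pi ->
  connected_graph (Gpi e pi).
Proof.
move=> Hs Hc inj x y.
apply: (connect_sub (e := e)); last exact: Hc.
move=> u v Huv; exact: (key V e pi Hs inj _ _ _ (ltnSn (pi u + pi v)) Huv).
Qed.
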